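(* Let $\Sigma$ be a finite set, $I\subseteq\Sigma\times\Sigma$ a symmetric irreflexive relation, $M=M(\Sigma,I)$, $\Sigma_0\subseteq\Sigma$, $I_0=(\Sigma_0\times\Sigma_0)\cap I$ and $M_0=M(\Sigma_0,I_0)\subseteq M$. Let $B\subseteq M$ consist of the identity $1$ together with all elements $t\in M\setminus\{1\}$ such that the first factor $w_1$ of the Foata normal form $t=w_1w_2\cdots w_n$ contains only letters of $\Sigma\setminus\Sigma_0$. Then every $w\in M$ can be written as $w=au$ with $a\in M_0$ and $u\in B$, and this decomposition is unique: if $au=bv$ with $a,b\in M_0$, $u,v\in B$, then $a=b$ and $u=v$. Consequently $B$ is a basis of $\mathbb{Z}M$ as a free left $\mathbb{Z}M_0$-module.
   Context: For a finite alphabet $\Sigma$ and a symmetric irreflexive relation $I\subseteq \Sigma\times\Sigma$, the free partially commutative monoid $M(\Sigma,I)$ is the monoid with presentation $\langle \Sigma \mid ab=ba \text{ for all } (a,b)\in I\rangle$; $M(\Sigma_0,I_0)$ is identified with its (injective) canonical image in $M$. Let $D=(\Sigma\times\Sigma)\setminus I$. Fix a total order on $\Sigma$. An element $x\in M(\Sigma,I)$ is written in Foata normal form if either it is the empty word or $x=x_1x_2\cdots x_n$ with $n>0$ and nonempty words $x_i$ such that: each $x_i$ is a product of distinct pairwise commuting letters written in increasing order; and for each $1\le i<n$ and each letter $a$ of $x_{i+1}$ there is a letter $b$ of $x_i$ with $(a,b)\in D$. Every element of $M(\Sigma,I)$ has a unique Foata normal form. *)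

(* Defs.v *)
(* Free partially commutative monoids M(Sigma, I) represented
   by words (seq Sigma) modulo the congruence generated by ab = ba, (a,b) in I. *)
From mathcomp Require Import all_boot.
Set Implicit Arguments. Unset Strict Implicit. Unset Printing Implicit Defensive.

Section Trace.
Variable Sigma : finType.
Variable I : rel Sigma.

Inductive tequiv : seq Sigma -> seq Sigma -> Prop :=
| tequiv_refl w : tequiv w w
| tequiv_swap u v a b : I a b -> tequiv (u ++ a :: b :: v) (u ++ b :: a :: v)
| tequiv_sym w1 w2 : tequiv w1 w2 -> tequiv w2 w1
| tequiv_trans w1 w2 w3 : tequiv w1 w2 -> tequiv w2 w3 -> tequiv w1 w3.

Definition dep (a b : Sigma) : bool := ~~ I a b.

Definition ltS (a b : Sigma) : bool := (enum_rank a < enum_rank b)%N.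

Definition foata_step (x : seq Sigma) : bool :=
  [&& x != [::], sorted ltS x &
      all (fun a => all (fun b => (a != b) ==> I a b) x) x].

Definition is_foata (F : seq (seq Sigma)) : bool :=
  all foata_step F &&
  sorted (fun x y => all (fun a => has (fun b => dep a b) x) y) F.

Definition inB (Sigma0 : {set Sigma}) (t : seq Sigma) : Prop :=
  tequiv t [::] \/
  exists F : seq (seq Sigma),
    [/\ is_foata F, tequiv t (flatten F) &
        all (fun a => a \notin Sigma0) (head [::] F)].

(* Membership in M0 = M(Sigma0, I0), identified with its image in M:
   the element is represented by a word over Sigma0. *)
Definition inM0 (Sigma0 : {set Sigma}) (a : seq Sigma) : Prop :=
  exists a0 : seq Sigma, all (fun x => x \in Sigma0) a0 /\ tequiv a a0.

End Trace.

(* Main.v *)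
Require Import Defs.
From mathcomp Require Import all_boot.
Set Implicit Arguments. Unset Strict Implicit. Unset Printing Implicit Defensive.

Section Aux.
Variable Sigma : finType.
Variable I : rel Sigma.
Hypothesis I_sym : symmetric I.
Hypothesis I_irr : irreflexive I.

Notation teq := (tequiv I).

Fixpoint minl (x : Sigma) (w : seq Sigma) : bool :=
  if w is z :: s then (x == z) || (I x z && minl x s) else false.

Lemma teq_catl p u v : teq u v -> teq (p ++ u) (p ++ v).
Proof.
elim=> [w|u1 v1 a b Hab|w1 w2 _ IH|w1 w2 w3 _ IH1 _ IH2].
- exact: tequiv_refl.
- by rewrite !catA; apply: tequiv_swap.
- exact: tequiv_sym.
- exact: tequiv_trans IH2.
Qed.

Lemma teq_catr s u v : teq u v -> teq (u ++ s) (v ++ s).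
Proof.
elim=> [w|u1 v1 a b Hab|w1 w2 _ IH|w1 w2 w3 _ IH1 _ IH2].
- exact: tequiv_refl.
- by rewrite -!catA /=; apply: tequiv_swap.
- exact: tequiv_sym.
- exact: tequiv_trans IH2.
Qed.

Lemma teq_cat u u' v v' : teq u u' -> teq v v' -> teq (u ++ v) (u' ++ v').
Proof.
move=> H1 H2; apply: tequiv_trans (teq_catr _ H1) _; exact: teq_catl.
Qed.

Lemma teq_size u v : teq u v -> size u = size v.
Proof.
elim=> // [u1 v1 a b _|w1 w2 w3 _ -> _ ->] //.
by rewrite !size_cat.
Qed.

Lemma minl_swap x u v a b : I a b ->
  minl x (u ++ a :: b :: v) = minl x (u ++ b :: a :: v).
Proof.
move=> Hab; elim: u => [|z u IH] /=; last by rewrite IH.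
case: (x =P a) => [xa|xa]; case: (x =P b) => [xb|xb] /=.
- by [].
- by rewrite /= xa Hab.
- by rewrite /= xb I_sym Hab.
- by rewrite /= andbCA.
Qed.

Lemma teq_minl x u v : teq u v -> minl x u = minl x v.
Proof.
elim=> // [u1 v1 a b Hab|w1 w2 w3 _ -> _ ->] //.
exact: minl_swap.
Qed.

Lemma rem_swap x u v a b : I a b ->
  teq (rem x (u ++ a :: b :: v)) (rem x (u ++ b :: a :: v)).
Proof.
move=> Hab; elim: u => [|z u IH] /=; last first.
  case: ifP => _; first exact: tequiv_swap.
  exact: (teq_catl [:: z] IH).
case: (boolP (a == x)) => [/eqP ax|ax]; case: (boolP (b == x)) => [/eqP bx|bx].
- by rewrite ax bx; apply: tequiv_refl.
- exact: tequiv_refl.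
- exact: tequiv_refl.
- exact: (tequiv_swap [::] _ Hab).
Qed.

Lemma teq_rem x u v : teq u v -> teq (rem x u) (rem x v).
Proof.
elim=> [w|u1 v1 a b Hab|w1 w2 _ IH|w1 w2 w3 _ IH1 _ IH2].
- exact: tequiv_refl.
- exact: rem_swap.
- exact: tequiv_sym.
- exact: tequiv_trans IH2.
Qed.

Lemma minl_rem x w : minl x w -> teq w (x :: rem x w).
Proof.
elim: w => [|z s IH] //= /orP [/eqP ->|/andP [Hxz Hs]].
  by rewrite eqxx; apply: tequiv_refl.
have zx : (z == x) = false.
  by apply/negbTE; apply/eqP => zx; move: Hxz; rewrite zx I_irr.
rewrite zx.
apply: tequiv_trans (teq_catl [:: z] (IH Hs)) _.
apply: (tequiv_swap [::]); by rewrite I_sym.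
Qed.

Lemma teq_cancel x u v : teq (x :: u) (x :: v) -> teq u v.
Proof. by move/(teq_rem x) => /=; rewrite eqxx. Qed.

Lemma minl_mem x w : minl x w -> x \in w.
Proof.
elim: w => //= z s IH /orP [/eqP ->|/andP [_ /IH]]; rewrite inE ?eqxx //.
by move=> ->; rewrite orbT.
Qed.

Lemma minl_cat x p s :
  minl x (p ++ s) = minl x p || (all (I x) p && minl x s).
Proof.
elim: p => //= z p ->.
by case: (x == z); case: (I x z); case: (minl x p).
Qed.

Lemma minl_cons x z s : minl x (z :: s) -> x != z -> minl x s.
Proof. by move=> /= /orP [-> //|/andP [_ ->]]. Qed.

Lemma minl_indep x y w : minl x w -> minl y w -> x != y -> I x y.
Proof.
elim: w => //= z s IH /orP [/eqP ->|/andP [Hxz Hx]] /orP [/eqP Ey|/andP [Hyz Hy]].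
- by move: Ey => ->; rewrite eqxx.
- by move=> _; rewrite I_sym.
- by move: Ey => ->.
- exact: IH.
Qed.

Definition good (S0 : {set Sigma}) (u : seq Sigma) : bool :=
  [forall x in S0, ~~ minl x u].

Lemma minl_head_gen f r a : (forall b, b \in f -> a != b -> I a b) ->
  a \in f -> minl a (f ++ r).
Proof.
elim: f => //= z f IH H.
rewrite inE; case: (boolP (a == z)) => //= az af.
rewrite H ?inE ?eqxx //= IH // => b bf; apply: H; by rewrite inE bf orbT.
Qed.

Lemma minl_head_step f r a : foata_step I f -> a \in f -> minl a (f ++ r).
Proof.
case/and3P=> _ _ /allP Hall af; apply: minl_head_gen => // b bf ab.
by move/allP: (Hall a af) => /(_ b bf) /implyP; apply.
Qed.

Lemma foata_minl F x : is_foata I F -> minl x (flatten F) -> x \in head [::] F.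
Proof.
elim: F => [|f F IH] /=; first by [].
case/andP=> /= /andP [Hf HallF] Hsort.
rewrite minl_cat => /orP [/minl_mem //|/andP [HI Hm]].
case Hxf : (x \in f) => //.
have HF : is_foata I F.
  by rewrite /is_foata HallF /=; apply: (path_sorted Hsort).
have Hx := IH HF Hm.
case: F Hsort Hx {IH HF HallF Hm} => [|g F] //= /andP [Hfg _] Hxg.
move/allP: Hfg => /(_ x Hxg) /hasP [b bf].
by rewrite /dep; move/allP: HI => /(_ b bf) ->.
Qed.

Lemma inB_good S0 u : inB I S0 u -> good S0 u.
Proof.
case=> [H|[F [HF Hu Hh]]]; apply/forallP => x; apply/implyP => xS.
  by rewrite (teq_minl x H).
rewrite (teq_minl x Hu); apply/negP => /(foata_minl HF) xh.
by move/allP: Hh => /(_ x xh); rewrite xS.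
Qed.

Lemma extract_min m w : uniq m -> all (minl^~ w) m ->
  exists w', teq w (m ++ w').
Proof.
elim: m w => [|x m IH] w /=.
  by move=> _ _; exists w; apply: tequiv_refl.
case/andP=> xm Hu /andP [Hx Hall].
have Hw := minl_rem Hx.
have Hall' : all (minl^~ (rem x w)) m.
  apply/allP => y ym; move/allP: Hall => /(_ y ym).
  rewrite (teq_minl y Hw) => /minl_cons; apply.
  by apply: contraNneq xm => <-.
have [w' Hw'] := IH _ Hu Hall'.
exists w'; apply: tequiv_trans Hw _.
exact: (teq_catl [:: x] Hw').
Qed.

Lemma foata_exists w : exists F, is_foata I F /\ teq w (flatten F).
Proof.
move: {2}(size w) (leqnn (size w)) => n; elim: n w => [|n IH] w.
  by case: w => // _; exists [::]; split=> //; apply: tequiv_refl.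
case: w => [|z s].
  by move=> _; exists [::]; split=> //; apply: tequiv_refl.
set w := z :: s => Hn.
pose P := fun i : 'I_#|Sigma| => minl (enum_val i) w.
pose m := map enum_val (filter P (enum 'I_#|Sigma|)).
have memm a : (a \in m) = minl a w.
  rewrite -{1}(enum_rankK a) /m mem_map; last exact: enum_val_inj.
  by rewrite mem_filter mem_enum andbT /P enum_rankK.
have Hsort : sorted (ltS (Sigma:=Sigma)) m.
  rewrite /m sorted_map; apply: sorted_filter.
    by move=> i j k; rewrite /= /ltS; apply: ltn_trans.
  have : sorted ltn (map val (enum 'I_#|Sigma|)).
    by rewrite val_enum_ord; apply: iota_ltn_sorted.
  rewrite sorted_map => H; apply: sub_sorted H => i j /=.
  by rewrite /ltS !enum_valK.
have Hu : uniq m.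
  apply: (sorted_uniq _ _ Hsort).
  - by move=> x y t; rewrite /ltS; apply: ltn_trans.
  - by move=> x; rewrite /ltS ltnn.
have Hall : all (minl^~ w) m by apply/allP => a; rewrite memm.
have [w' Hw'] := extract_min Hu Hall.
have zm : z \in m by rewrite memm /= eqxx.
have Hsz : size w' <= n.
  have := teq_size Hw'; rewrite size_cat => Hs.
  have : 0 < size m by case: (m) zm.
  move: Hn; rewrite Hs; case: (size m) => //= k.
  by rewrite addSn ltnS => H _; apply: leq_trans H; rewrite leq_addl.
have [F [HF HwF]] := IH _ Hsz.
exists (m :: F); split; last first.
  apply: tequiv_trans Hw' _; exact: teq_catl.
have Hstep : foata_step I m.
  rewrite /foata_step Hsort /=; apply/andP; split.
    by case: (m) zm.
  apply/allP => a am; apply/allP => b bm; apply/implyP => ab.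
  by apply: (minl_indep (x:=a) (y:=b) (w:=w)); rewrite -?memm.
have HF' := HF.
move: HF; rewrite /is_foata /= Hstep => /andP [-> HsF] /=.
case: F HsF HwF HF' => [|g F] //= HsF HwF HF'; rewrite HsF andbT.
have Hg : foata_step I g by move: HF'; rewrite /is_foata /= => /andP [/andP [-> _] _].
apply/allP => a ag; apply/hasP.
case Hd : (all (I a) m).
  have Hmin : minl a (m ++ w').
    by rewrite minl_cat Hd (teq_minl a HwF) (minl_head_step _ Hg ag) orbT.
  have : a \in m by rewrite memm (teq_minl a Hw').
  by move/allP: Hd => Hd /Hd; rewrite I_irr.
move/negbT: Hd => /allPn [b bm Hb]; exists b => //.
Qed.

Lemma good_inB (S0 : {set Sigma}) u : good S0 u -> inB I S0 u.
Proof.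
move=> /forallP Hg; right.
have [F [HF Hu]] := foata_exists u.
exists F; split=> //.
case: F HF Hu => [|f F] //= HF Hu.
have Hf : foata_step I f by move: HF; rewrite /is_foata /= => /andP [/andP [-> _] _].
apply/allP => x xf; apply/negP => xS.
move: (Hg x); rewrite xS /= (teq_minl x Hu) /=.
by rewrite (minl_head_step _ Hf xf).
Qed.

Lemma decomp_exists (S0 : {set Sigma}) (w : seq Sigma) : exists a u,
  [/\ all (fun x => x \in S0) a, good S0 u & teq w (a ++ u)].
Proof.
move: {2}(size w) (leqnn (size w)) => n; elim: n w => [|n IH] w Hn.
  exists [::], w; split=> //; last exact: tequiv_refl.
  by case: w Hn => // _; rewrite /good; apply/forallP => x; apply/implyP.
case: (boolP (good S0 w)) => Hg.
  by exists [::], w; split=> //; apply: tequiv_refl.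
move: Hg; rewrite /good negb_forall => /existsP [x].
rewrite negb_imply negbK => /andP [xS Hx].
have Hw := minl_rem Hx.
have Hs : size (rem x w) <= n.
  rewrite size_rem ?minl_mem //; move: Hn; case: (size w) => //.
have [a [u [Ha Hu Hr]]] := IH _ Hs.
exists (x :: a), u; split=> //=; first by rewrite xS.
apply: tequiv_trans Hw _; exact: (teq_catl [:: x] Hr).
Qed.

Lemma all_rem (P : pred Sigma) x s : all P s -> all P (rem x s).
Proof.
move=> /allP H; apply/allP => y /mem_rem; exact: H.
Qed.

Lemma decomp_unique (S0 : {set Sigma}) (a0 b0 u v : seq Sigma) :
  all (fun x => x \in S0) a0 -> all (fun x => x \in S0) b0 ->
  good S0 u -> good S0 v -> teq (a0 ++ u) (b0 ++ v) -> teq a0 b0 /\ teq u v.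
Proof.
elim: a0 b0 => [|x a0 IH] b0 Ha Hb /forallP Hu /forallP Hv /= H.
  case: b0 Hb H => [|y b0] Hb H; first by split=> //; apply: tequiv_refl.
  move: (Hu y); move: Hb => /= /andP [-> _] /=.
  by rewrite (teq_minl y H) /= eqxx.
move: Ha => /= /andP [xS Ha].
have Hm : minl x (b0 ++ v) by rewrite -(teq_minl x H) /= eqxx.
move: Hm; rewrite minl_cat => /orP [Hb0|/andP [HI Hmv]]; last first.
  by move: (Hv x); rewrite xS Hmv.
have Hb' := minl_rem Hb0.
have H2 : teq (x :: (a0 ++ u)) (x :: (rem x b0 ++ v)).
  apply: tequiv_trans H _; exact: (teq_catr v Hb').
have [IH1 IH2] := IH (rem x b0) Ha (all_rem x Hb) (introT forallP Hu)
  (introT forallP Hv) (teq_cancel H2).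
split=> //; apply: tequiv_trans (tequiv_sym Hb').
exact: (teq_catl [:: x] IH1).
Qed.

End Aux.

Theorem mainTheorem3 (Sigma : finType) (I : rel Sigma)
  (I_sym : symmetric I) (I_irr : irreflexive I) (Sigma0 : {set Sigma}) :
  (forall w : seq Sigma, exists a u : seq Sigma,
      [/\ inM0 I Sigma0 a, inB I Sigma0 u & tequiv I w (a ++ u)]) /\
  (forall a b u v : seq Sigma,
      inM0 I Sigma0 a -> inM0 I Sigma0 b -> inB I Sigma0 u -> inB I Sigma0 v ->
      tequiv I (a ++ u) (b ++ v) -> tequiv I a b /\ tequiv I u v).
Proof.
split.
  move=> w; have [a [u [Ha Hu Hw]]] := decomp_exists I_sym I_irr Sigma0 w.
  exists a, u; split=> //.
    by exists a; split=> //; apply: tequiv_refl.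
  exact: good_inB.
move=> a b u v [a0 [Ha0 Ha]] [b0 [Hb0 Hb]] /(inB_good I_sym) Hu /(inB_good I_sym) Hv H.
have H' : tequiv I (a0 ++ u) (b0 ++ v).
  apply: tequiv_trans (teq_catr u (tequiv_sym Ha)) _.
  apply: tequiv_trans H _; exact: teq_catr.
have [H1 H2] := decomp_unique I_sym I_irr Ha0 Hb0 Hu Hv H'.
split=> //; apply: tequiv_trans Ha _; apply: tequiv_trans H1 _.
exact: tequiv_sym.
Qed.
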